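(* Let $(\Sigma_+,\Sigma_-,N_1,N_2,N_3)$ be a solution of the Wainwright–Hsu system satisfying the constraint, with $N_1=0$, $N_2,N_3>0$ and $\Sigma_-^2+(N_2-N_3)^2>0$. Then for every $p>1$, $1+\Sigma_+\in L^p([0,\infty))$.
   Context: Wainwright–Hsu system: for functions $N_1,N_2,N_3,\Sigma_+,\Sigma_-$ of $\tau\in\mathbb{R}$ (prime denotes $d/d\tau$), $N_1'=(q-4\Sigma_+)N_1$, $N_2'=(q+2\Sigma_++2\sqrt3\Sigma_-)N_2$, $N_3'=(q+2\Sigma_+-2\sqrt3\Sigma_-)N_3$, $\Sigma_+'=-(2-q)\Sigma_+-3S_+$, $\Sigma_-'=-(2-q)\Sigma_--3S_-$, where $q=2(\Sigma_+^2+\Sigma_-^2)$, $S_+=\frac12[(N_2-N_3)^2-N_1(2N_1-N_2-N_3)]$, $S_-=\frac{\sqrt3}{2}(N_3-N_2)(N_1-N_2-N_3)$, together with the constraint $\Sigma_+^2+\Sigma_-^2+\frac34[N_1^2+N_2^2+N_3^2-2(N_1N_2+N_2N_3+N_1N_3)]=1$. Solutions exist for all $\tau\in\mathbb{R}$. *)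

(* Defs.v *)
From HB Require Import structures.
From mathcomp Require Import all_boot all_order all_algebra.
From mathcomp Require Import all_classical all_reals all_analysis.
Set Implicit Arguments. Unset Strict Implicit. Unset Printing Implicit Defensive.
Import Order.TTheory GRing.Theory Num.Theory.
Import numFieldNormedType.Exports.
Local Open Scope ring_scope.

Section WH.
Variable R : realType.

Definition WH_q (Sp Sm : R) : R := 2 * (Sp ^+ 2 + Sm ^+ 2).
Definition WH_Splus (N1 N2 N3 : R) : R :=
  2^-1 * ((N2 - N3) ^+ 2 - N1 * (2 * N1 - N2 - N3)).
Definition WH_Sminus (N1 N2 N3 : R) : R :=
  Num.sqrt 3 / 2 * (N3 - N2) * (N1 - N2 - N3).

Definition WH_solution (N1 N2 N3 Sp Sm : R -> R) : Prop :=
  forall t : R,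
    [/\ is_derive t 1 N1 ((WH_q (Sp t) (Sm t) - 4 * Sp t) * N1 t)
        /\ is_derive t 1 N2
          ((WH_q (Sp t) (Sm t) + 2 * Sp t + 2 * Num.sqrt 3 * Sm t) * N2 t),
        is_derive t 1 N3
          ((WH_q (Sp t) (Sm t) + 2 * Sp t - 2 * Num.sqrt 3 * Sm t) * N3 t),
        is_derive t 1 Sp
          (- (2 - WH_q (Sp t) (Sm t)) * Sp t - 3 * WH_Splus (N1 t) (N2 t) (N3 t)),
        is_derive t 1 Sm
          (- (2 - WH_q (Sp t) (Sm t)) * Sm t - 3 * WH_Sminus (N1 t) (N2 t) (N3 t))
      & Sp t ^+ 2 + Sm t ^+ 2
        + 3 / 4 * (N1 t ^+ 2 + N2 t ^+ 2 + N3 t ^+ 2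
                   - 2 * (N1 t * N2 t + N2 t * N3 t + N1 t * N3 t)) = 1].

End WH.

(* Main.v *)
Require Import Defs.
From HB Require Import structures.
From mathcomp Require Import all_boot all_order all_algebra.
From mathcomp Require Import all_classical all_reals all_analysis.
From mathcomp Require Import ring lra.
From mathcomp Require Import measurable_realfun.
Import Order.TTheory GRing.Theory Num.Theory.
Import numFieldNormedType.Exports.
Local Open Scope classical_set_scope.
Local Open Scope ring_scope.

Section Helpers.
Context {R : realType}.
Implicit Types (f g : R -> R) (t : R).

Lemma dfM f g t df dg : is_derive t 1 f df -> is_derive t 1 g dg ->
  is_derive t 1 (fun s => f s * g s) (f t * dg + g t * df).
Proof. move=> h1 h2; exact: (is_deriveM h1 h2). Qed.

Lemma dfD f g t df dg : is_derive t 1 f df -> is_derive t 1 g dg ->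
  is_derive t 1 (fun s => f s + g s) (df + dg).
Proof. move=> h1 h2; exact: (is_deriveD h1 h2). Qed.

Lemma dfB f g t df dg : is_derive t 1 f df -> is_derive t 1 g dg ->
  is_derive t 1 (fun s => f s - g s) (df - dg).
Proof. move=> h1 h2; exact: (is_deriveB h1 h2). Qed.

Lemma dfC (c : R) t : is_derive t 1 (fun _ => c) 0.
Proof. exact: is_derive_cst. Qed.

Lemma dfZ f (c : R) t df : is_derive t 1 f df ->
  is_derive t 1 (fun s => c * f s) (c * df).
Proof. move=> h; have := @dfM (fun _ => c) f t 0 df (dfC c t) h. move=> H; apply: is_derive_eq H _; ring. Qed.

Lemma dfV f t df : f t != 0 -> is_derive t 1 f df ->
  is_derive t 1 (fun s => (f s)^-1) (- df / f t ^+ 2).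
Proof.
move=> h1 h2; have H := is_deriveV h1 h2; apply: is_derive_eq H _.
rewrite /GRing.scale /=. ring.
Qed.

Lemma dfln f t df : 0 < f t -> is_derive t 1 f df ->
  is_derive t 1 (fun s => ln (f s)) (df / f t).
Proof.
move=> h1 h2; have H := (@is_derive1_comp R (@ln R) f t _ _ (is_derive1_ln h1) h2).
apply: is_derive_eq H _; by rewrite mulrC.
Qed.

Lemma dfexp f t df : is_derive t 1 f df ->
  is_derive t 1 (fun s => expR (f s)) (expR (f t) * df).
Proof.
move=> h; exact: (@is_derive1_comp R (@expR R) f t _ _ (is_derive_expR (f t)) h).
Qed.

Lemma mono_up f f' (a s t : R) : (forall u : R, is_derive u 1 f (f' u)) ->
  (forall u : R, a <= u -> 0 <= f' u) -> a <= s -> s <= t -> f s <= f t.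
Proof.
move=> hd hpos has hst.
have [c /[!in_itv]/= /andP[c1 c2] E] : exists2 c, c \in `[s, t] & f t - f s = f' c * (t - s).
  apply: (MVT_segment hst (fun u _ => hd u)).
  apply: derivable_within_continuous => u _.
  by case: (hd u).
rewrite -subr_ge0 E mulr_ge0 // ?subr_ge0 //.
by apply: hpos; rewrite (le_trans has).
Qed.

End Helpers.
Arguments dfM {R f g t df dg}.
Arguments dfD {R f g t df dg}.
Arguments dfB {R f g t df dg}.
Arguments dfZ {R f} c {t df}.
Arguments dfV {R f t df}.
Arguments dfln {R f t df}.
Arguments dfexp {R f t df}.


Section Alg.
Context {R : realType}.

Lemma alg_key (x a Y S P m : R) :
  0 < x -> 0 < P -> 0 < S -> S ^+ 2 = 4 / 3 * Y ^+ 2 + 4 * P ->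
  (x - 1) ^+ 2 + a ^+ 2 + Y ^+ 2 = 1 -> 0 < m ->
  64 * x ^+ 2 <= 9 * m ^+ 2 * P ->
  [/\ - (m / 4 * x) <= 2 * Y ^+ 3 * a / (3 * S),
      2 * Y ^+ 3 * a / (3 * S) <= m / 4 * x,
      0 <= 4 * a ^+ 2 * Y ^+ 2 / (3 * S ^+ 2)
    & (4 * x <= 3 * m * P -> 4 * a ^+ 2 * Y ^+ 2 / (3 * S ^+ 2) <= m / 4 * x)].
Proof.
move=> x0 P0 S0 hSP hc m0 hd.
have r2 : a ^+ 2 + Y ^+ 2 = 2 * x - x ^+ 2 by nra.
have q1 := sqr_ge0 (a - Y); have q2 := sqr_ge0 (a + Y); have q3 := sqr_ge0 x.
have ya1 : Y * a <= x by nra.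
have ya2 : - x <= Y * a by nra.
have y2 : Y ^+ 2 <= 2 * x by nra.
have Y20 : 0 <= Y ^+ 2 by exact: sqr_ge0.
have num1 : 2 * Y ^+ 3 * a <= 4 * x ^+ 2.
  have e : 2 * Y ^+ 3 * a = 2 * Y ^+ 2 * (Y * a) by ring.
  rewrite e; nra.
have num2 : - (4 * x ^+ 2) <= 2 * Y ^+ 3 * a.
  have e : 2 * Y ^+ 3 * a = 2 * Y ^+ 2 * (Y * a) by ring.
  rewrite e; nra.
have hS2 : (16 * x) ^+ 2 <= (3 * m * S) ^+ 2.
  have -> : (3 * m * S) ^+ 2 = 9 * m ^+ 2 * S ^+ 2 by ring.
  rewrite hSP; nra.
have hS : 16 * x <= 3 * m * S.
  have p1 : 0 < 3 * m * S by rewrite !mulr_gt0.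
  have p2 : 0 < 16 * x by rewrite mulr_gt0.
  rewrite leNgt; apply/negP => hn.
  have : (3 * m * S) ^+ 2 < (16 * x) ^+ 2 by nra.
  by rewrite ltNge hS2.
have S3 : 0 < 3 * S by nra.
have S32 : 0 < 3 * S ^+ 2 by nra.
have ya3 : (Y * a) ^+ 2 <= x ^+ 2 by nra.
split.
- rewrite ler_pdivlMr //; nra.
- rewrite ler_pdivrMr //; nra.
- have q4 := sqr_ge0 a; apply: divr_ge0; nra.
- move=> hq; rewrite ler_pdivrMr //.
  have e : 4 * a ^+ 2 * Y ^+ 2 = 4 * (Y * a) ^+ 2 by ring.
  have h5 : 0 <= m * x * Y ^+ 2.
    by apply: mulr_ge0; [apply: mulr_ge0; exact: ltW | exact: sqr_ge0].
  have h6 : 0 <= x * (3 * m * P - 4 * x).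
    by apply: mulr_ge0; [exact: ltW | rewrite subr_ge0].
  rewrite e hSP; nra.
Qed.


Lemma ln_lt_div2 (a b u v : R) : 0 < a -> 0 < b -> 0 < u -> 0 < v ->
  ln (a / b) < ln (u / v) -> a * v < b * u.
Proof.
move=> a0 b0 u0 v0; rewrite ltr_ln ?posrE ?divr_gt0 // => h.
have bv : 0 < b * v by rewrite mulr_gt0.
rewrite -(ltr_pM2r bv) in h.
have e1 : a / b * (b * v) = a * v by field; rewrite gt_eqF.
have e2 : u / v * (b * v) = b * u by field; rewrite gt_eqF.
by rewrite e1 e2 in h.
Qed.

End Alg.
Arguments alg_key {R x a Y S P m}.

Section Integ.
Variable R : realType.

Lemma powR_lim (p : R) : 1 < p -> (1 + t) `^ (1 - p) @[t --> +oo] --> 0.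
Proof.
move=> hp; apply/cvgr0Pnorm_lt => e e0.
exists (e `^ (1 - p)^-1); split; first exact: num_real.
move=> t ht.
have M0 : 0 < e `^ (1 - p)^-1 by apply: powR_gt0.
have t1 : 0 < 1 + t by rewrite (lt_trans M0)// (lt_le_trans ht)// lerDr ler01.
rewrite ger0_norm ?powR_ge0//.
have -> : e = (e `^ (1 - p)^-1) `^ (1 - p).
  rewrite -powRrM mulVf ?powRr1 //; first exact: ltW.
  by rewrite subr_eq0 lt_eqF.
have E : forall y : R, y `^ (1 - p) = (y `^ (p - 1))^-1.
  by move=> y; rewrite -powRN opprB.
rewrite !E ltf_pV2 ?posrE ?powR_gt0//.
have hp1 : 0 < p - 1 by rewrite subr_gt0.
rewrite (gt0_ltr_powR hp1) ?in_itv/= ?andbT ?(ltW M0) ?(ltW t1)//.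
- by rewrite nnegrE ltW.
- by rewrite nnegrE ltW.
- by rewrite (lt_le_trans ht)// lerDr.
Qed.


Local Notation mu := (@lebesgue_measure R).

Lemma is_derive_pw (c : R) (t : R) : 0 < 1 + t ->
  is_derive t 1 (fun s => (1 + s) `^ c) (c * (1 + t) `^ (c - 1)).
Proof.
move=> h.
have H := @is_derive1_comp R (fun y => @powR R y c) (fun s => 1 + s) t _ _
  (is_derive1_powR c h) (dfD (dfC 1 t) (is_derive_id t 1)).
apply: is_derive_eq H _; by rewrite add0r mulr1.
Qed.

Lemma integrable_pw (p : R) : 1 < p ->
  mu.-integrable `[0, +oo[ (fun t => ((1 + t) `^ (- p))%:E).
Proof.
move=> hp.
have hp1 : 0 < p - 1 by rewrite subr_gt0.
set F := fun s : R => - ((1 + s) `^ (1 - p)) / (p - 1).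
have dF : forall t : R, 0 < 1 + t -> is_derive t 1 F ((1 + t) `^ (- p)).
  move=> t ht; rewrite /F.
  have H := dfM (is_deriveN (is_derive_pw (1 - p) t ht)) (dfC (p - 1)^-1 t).
  apply: is_derive_eq H _.
  rewrite /GRing.scale /= mulr0 add0r addrAC subrr add0r.
  by field; rewrite gt_eqF.
have cf : {within `[0, +oo[, continuous (fun t : R => (1 + t) `^ (- p))}.
  apply: derivable_within_continuous => t; rewrite in_itv/= andbT => t0.
  have ht : 0 < 1 + t by lra.
  by case: (is_derive_pw (- p) t ht).
have mf : measurable_fun `[(0:R), +oo[ (fun t : R => (1 + t) `^ (- p)).
  apply: measurable_funTS.
  apply: (@measurableT_comp _ _ _ _ _ _ (fun y : R => y `^ (- p)) _ (fun t : R => 1 + t)).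
    exact: measurable_powR.
  exact: measurable_funD.
have cF : forall t : R, 0 < 1 + t -> {for t, continuous F}.
  move=> t ht; apply: differentiable_continuous; apply/derivable1_diffP.
  by case: (dF t ht).
apply/integrableP; split.
  exact/measurable_EFinP.
under eq_integral => t _ do rewrite gee0_abs ?lee_fin ?powR_ge0//.
rewrite (@ge0_continuous_FTC2y R (fun t => (1 + t) `^ (- p)) F 0 0) ?ltry//.
- by move=> t _; exact: powR_ge0.
- have H := @cvgMr_tmp _ _ _ _ _ _ ((p - 1)^-1) (cvgN (powR_lim p hp)).
  rewrite oppr0 mul0r in H; exact: H.
- move=> t t0; have ht : 0 < 1 + t by lra.
  by case: (dF t ht).
- apply: cvg_at_right_filter; apply: cF; by rewrite addr0.
- move=> t; rewrite in_itv/= andbT => t0.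
  have ht : 0 < 1 + t by lra.
  rewrite derive1E; have := dF t ht; by case.
Qed.


Lemma integ_of_bound (f : R -> R) (C p : R) : continuous f -> 1 < p -> 0 <= C ->
  (forall t, 0 <= t -> `|f t| <= C / (1 + t)) ->
  mu.-integrable `[0, +oo[ (fun t => (`|f t| `^ p)%:E).
Proof.
move=> cf hp C0 hb.
have p0 : 0 <= p by lra.
apply: (@le_integrable _ _ _ mu _ _ _ (fun t => (C `^ p)%:E * ((1 + t) `^ (- p))%:E)%E).
- by [].
- apply/measurable_EFinP.
  apply: measurable_funTS.
  apply: (@measurableT_comp _ _ _ _ _ _ (fun y : R => y `^ p) _ (fun t : R => `|f t|)).
    exact: measurable_powR.
  apply: measurableT_comp => //.
  exact: continuous_measurable_fun.
- move=> t; rewrite /= in_itv/= andbT => t0.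
  have ht : 0 < 1 + t by lra.
  have e1 : 0 <= `|f t| `^ p by exact: powR_ge0.
  have e2 : 0 <= C `^ p * (1 + t) `^ (- p) by rewrite mulr_ge0 ?powR_ge0.
  rewrite lee_fin (ger0_norm e1) (ger0_norm e2).
  rewrite powRN.
  have h1 := hb t t0.
  have h2 : `|f t| * (1 + t) <= C by rewrite -ler_pdivlMr.
  have h3 : (`|f t| * (1 + t)) `^ p <= C `^ p.
    apply: ge0_ler_powR => //; rewrite nnegrE ?mulr_ge0//.
    exact: ltW.
  rewrite (powRM _ (normr_ge0 _) (ltW ht)) in h3.
  by rewrite ler_pdivlMr ?powR_gt0.
- have H := integrable_pw p hp.
  apply: integrableZl => //.
Qed.

End Integ.

Section Core.
Context {R : realType} (N2 N3 Sp Sm : R -> R).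
Local Notation s3 := (Num.sqrt (3:R)).
Hypothesis hN2 : forall t : R, 0 < N2 t.
Hypothesis hN3 : forall t : R, 0 < N3 t.
Hypothesis hr : forall t : R, 0 < Sm t ^+ 2 + (N2 t - N3 t) ^+ 2.
Hypothesis hC : forall t : R, Sm t ^+ 2 = 1 - Sp t ^+ 2 - 3 / 4 * (N2 t - N3 t) ^+ 2.
Hypothesis dN2 : forall t : R, is_derive t 1 N2
  ((2 * (Sp t ^+ 2 + Sm t ^+ 2) + 2 * Sp t + 2 * s3 * Sm t) * N2 t).
Hypothesis dN3 : forall t : R, is_derive t 1 N3
  ((2 * (Sp t ^+ 2 + Sm t ^+ 2) + 2 * Sp t - 2 * s3 * Sm t) * N3 t).
Hypothesis dSp : forall t : R, is_derive t 1 Sp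
  (- (2 - 2 * (Sp t ^+ 2 + Sm t ^+ 2)) * Sp t - 3 / 2 * (N2 t - N3 t) ^+ 2).
Hypothesis dSm : forall t : R, is_derive t 1 Sm
  (- (2 - 2 * (Sp t ^+ 2 + Sm t ^+ 2)) * Sm t
   - 3 * (s3 / 2) * (N2 t - N3 t) * (N2 t + N3 t)).

Lemma s3s : s3 * s3 = 3.
Proof. by rewrite -expr2 sqr_sqrtr. Qed.

Definition xf (t : R) := 1 + Sp t.
Definition Yf (t : R) := s3 / 2 * (N2 t - N3 t).
Definition Sf (t : R) := N2 t + N3 t.
Definition Pf (t : R) := N2 t * N3 t.

Lemma dx (t : R) : is_derive t 1 xf (-2 * Yf t ^+ 2 * xf t).
Proof.
have H := dfD (dfC 1 t) (dSp t); apply: is_derive_eq H _.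
rewrite /xf /Yf hC; by field: s3s.
Qed.

Lemma dP (t : R) : is_derive t 1 Pf ((4 * xf t - 4 * Yf t ^+ 2) * Pf t).
Proof.
have H := dfM (dN2 t) (dN3 t); apply: is_derive_eq H _.
rewrite /xf /Yf /Pf hC; by field: s3s.
Qed.

Lemma dS (t : R) : is_derive t 1 Sf ((2 * xf t - 2 * Yf t ^+ 2) * Sf t + 4 * Sm t * Yf t).
Proof.
have H := dfD (dN2 t) (dN3 t); apply: is_derive_eq H _.
rewrite /xf /Yf /Sf hC; by field: s3s.
Qed.

Lemma dY (t : R) : is_derive t 1 Yf ((2 * xf t - 2 * Yf t ^+ 2) * Yf t + 3 * Sm t * Sf t).
Proof.
have H := dfZ (s3 / 2) (dfB (dN2 t) (dN3 t)); apply: is_derive_eq H _.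
rewrite /xf /Yf /Sf hC; by field: s3s.
Qed.

Lemma da (t : R) : is_derive t 1 Sm (-2 * Yf t ^+ 2 * Sm t - 3 * Yf t * Sf t).
Proof.
have H := dSm t; apply: is_derive_eq H _.
rewrite /xf /Yf /Sf hC; by field: s3s.
Qed.


Lemma Y2 (t : R) : Yf t ^+ 2 = 3 / 4 * (N2 t - N3 t) ^+ 2.
Proof. rewrite /Yf; by field: s3s. Qed.

Lemma cons (t : R) : (xf t - 1) ^+ 2 + Sm t ^+ 2 + Yf t ^+ 2 = 1.
Proof. rewrite Y2 hC /xf; by field. Qed.

Lemma SP (t : R) : Sf t ^+ 2 = 4 / 3 * Yf t ^+ 2 + 4 * Pf t.
Proof. rewrite Y2 /Sf /Pf; by field. Qed.

Lemma Spos (t : R) : 0 < Sf t.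
Proof. by rewrite /Sf addr_gt0. Qed.

Lemma Ppos (t : R) : 0 < Pf t.
Proof. by rewrite /Pf mulr_gt0. Qed.

Lemma xbnd (t : R) : 0 < xf t /\ xf t < 2.
Proof.
have h1 := cons t; have h2 := hr t; rewrite Y2 in h1.
split; nra.
Qed.

Lemma xpos (t : R) : 0 < xf t. Proof. by case: (xbnd t). Qed.

Definition kf (t : R) := Sm t * Yf t / (3 * Sf t).
Definition kd (t : R) := (Sm t ^+ 2 - Yf t ^+ 2) - 2 * Yf t ^+ 3 * Sm t / (3 * Sf t)
  - 4 * Sm t ^+ 2 * Yf t ^+ 2 / (3 * Sf t ^+ 2).

Lemma dk (t : R) : is_derive t 1 kf (kd t).
Proof.
have S0 := Spos t.
have h3 : 3 * Sf t != 0 by rewrite mulf_neq0 // gt_eqF.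
have H := dfM (dfM (da t) (dY t)) (@dfV _ (fun s => 3 * Sf s) t _ h3 (dfZ 3 (dS t))).
apply: is_derive_eq H _.
rewrite /kd; field; by rewrite gt_eqF.
Qed.

Definition Uf (t : R) := ln (Pf t / (xf t * xf t)).

Lemma dU (t : R) : is_derive t 1 Uf (4 * xf t).
Proof.
have x0 := xpos t; have P0 := Ppos t.
have hxx : xf t * xf t != 0 by rewrite mulf_neq0 // gt_eqF.
have hq : 0 < Pf t / (xf t * xf t) by rewrite divr_gt0 // mulr_gt0.
have H := @dfln _ (fun s => Pf s / (xf s * xf s)) t _ hq
  (dfM (dP t) (@dfV _ (fun s => xf s * xf s) t _ hxx (dfM (dx t) (dx t)))).
apply: is_derive_eq H _.
field; by rewrite !gt_eqF.
Qed.

Definition Gf (t : R) := ln (Pf t / xf t) - kf t - Uf t / 4.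

Lemma dG (t : R) : is_derive t 1 Gf ((4 * xf t - 2 * Yf t ^+ 2) - kd t - xf t).
Proof.
have x0 := xpos t; have P0 := Ppos t.
have hx : xf t != 0 by rewrite gt_eqF.
have hq : 0 < Pf t / xf t by rewrite divr_gt0.
have H1 := @dfln _ (fun s => Pf s / xf s) t _ hq (dfM (dP t) (dfV hx (dx t))).
have H := dfB (dfB H1 (dk t)) (dfM (dU t) (dfC (4^-1) t)).
apply: is_derive_eq H _.
field; by rewrite !gt_eqF.
Qed.

Definition Zf (t : R) := expR (kf t) / xf t.

Lemma dZ (t : R) : is_derive t 1 Zf (Zf t * (kd t + 2 * Yf t ^+ 2)).
Proof.
have x0 := xpos t.
have hx : xf t != 0 by rewrite gt_eqF.
have H := dfM (dfexp (dk t)) (dfV hx (dx t)).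
apply: is_derive_eq H _.
rewrite /Zf; field; by rewrite !gt_eqF.
Qed.

Definition hf (t : R) := Uf t / 4 - t * xf t.

Lemma dh (t : R) : is_derive t 1 hf (2 * t * Yf t ^+ 2 * xf t).
Proof.
have H := dfB (dfM (dU t) (dfC (4^-1) t)) (dfM (is_derive_id t 1) (dx t)).
apply: is_derive_eq H _.
by field.
Qed.


Lemma xdec (s t : R) : s <= t -> xf t <= xf s.
Proof.
move=> st.
have := @mono_up R (fun u => - xf u) (fun u => 2 * Yf u ^+ 2 * xf u) s s t.
rewrite lerN2; apply => //.
- move=> u; have H := is_deriveN (dx u); apply: is_derive_eq H _; ring.
- move=> u _; have := xpos u; have := sqr_ge0 (Yf u); nra.
Qed.

Lemma Umono (s t : R) : s <= t -> Uf s <= Uf t.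
Proof.
move=> st; apply: (@mono_up R Uf (fun u => 4 * xf u) s s t) => //.
- exact: dU.
- move=> u _; have := xpos u; lra.
Qed.

Lemma kbound (t : R) : - (1 / 3) <= kf t /\ kf t <= 1 / 3.
Proof.
have c := cons t; have hs := SP t; have S0 := Spos t; have P0 := Ppos t.
have q1 := sqr_ge0 (xf t - 1); have q2 := sqr_ge0 (Yf t).
have a1 : Sm t ^+ 2 <= 1 by lra.
have y1 : Yf t ^+ 2 <= Sf t ^+ 2 by lra.
have ay : (Sm t * Yf t) ^+ 2 <= Sf t ^+ 2.
  rewrite exprMn; have := sqr_ge0 (Yf t); have := sqr_ge0 (Sm t); nra.
have S3 : 0 < 3 * Sf t by lra.
rewrite /kf; split.
- rewrite ler_pdivlMr //; nra.
- rewrite ler_pdivrMr //; nra.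
Qed.

Lemma Vhalf (t m : R) : 0 < m -> m <= 2 -> 64 * xf t ^+ 2 <= 9 * m ^+ 2 * Pf t ->
  0 <= 3 * xf t - 2 * Yf t ^+ 2 - kd t.
Proof.
move=> m0 m2 hd.
have [e1 e2 e3 _] := alg_key (xpos t) (Ppos t) (Spos t) (SP t) (cons t) m0 hd.
have c := cons t; have x0 := xpos t.
rewrite /kd; nra.
Qed.

Lemma Vgood (t m : R) : 0 < m -> xf t <= 2 - m -> 64 * xf t ^+ 2 <= 9 * m ^+ 2 * Pf t ->
  4 * xf t <= 3 * m * Pf t -> m / 2 * xf t <= kd t + 2 * Yf t ^+ 2.
Proof.
move=> m0 xm hd hq.
have [e1 e2 e3 e4] := alg_key (xpos t) (Ppos t) (Spos t) (SP t) (cons t) m0 hd.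
have e5 := e4 hq.
have c := cons t; have x0 := xpos t.
rewrite /kd; nra.
Qed.


Lemma core_bound : exists C : R, 0 <= C /\ forall t : R, 0 <= t -> `|xf t| <= C / (1 + t).
Proof.
set m := 2 - xf 0.
have [x00 x02] := xbnd 0.
have m0 : 0 < m by rewrite /m subr_gt0.
have m2 : m <= 2 by rewrite /m; lra.
have xle : forall t : R, 0 <= t -> xf t <= 2 - m.
  by move=> t t0; rewrite /m opprB addrC subrK; exact: xdec.
have fin : forall (C t : R), 0 <= t -> xf t * (1 + t) <= C -> `|xf t| <= C / (1 + t).
  move=> C t t0 h; rewrite ger0_norm; last exact: ltW (xpos t).
  by rewrite ler_pdivlMr //; lra.
case: (pselect (exists B, forall t : R, 0 <= t -> Uf t <= B)) => [[B hB]|hU].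
-
  have hm : forall t : R, 0 <= t -> hf 0 <= hf t.
    move=> t t0; apply: (@mono_up R hf (fun u => 2 * u * Yf u ^+ 2 * xf u) 0) => //.
    + exact: dh.
    + move=> u u0; have := xpos u; have := sqr_ge0 (Yf u).
      move=> a b; apply: mulr_ge0; last exact: ltW.
      by apply: mulr_ge0 => //; apply: mulr_ge0.
  have B0 := hB 0 (lexx 0).
  exists ((B - Uf 0) / 4 + 2); split; first lra.
  move=> t t0; apply: fin => //.
  have h1 := hm t t0; have h2 := hB t t0; have [_ h3] := xbnd t.
  rewrite /hf mul0r subr0 in h1.
  lra.
- have hU' : forall B : R, exists t : R, 0 <= t /\ B < Uf t.
    move=> B; apply: contrapT => hn; apply: hU; exists B => t t0.
    rewrite leNgt; apply/negP => ht; apply: hn; by exists t.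
  have [T1 [T10 hT1]] := hU' (ln (64 / (9 * m ^+ 2))).
  have reg1 : forall t : R, T1 <= t -> 64 * xf t ^+ 2 <= 9 * m ^+ 2 * Pf t.
    move=> t tT.
    have h := lt_le_trans hT1 (Umono _ _ tT).
    have x0 := xpos t.
    have : 64 * (xf t * xf t) < 9 * m ^+ 2 * Pf t.
      apply: (ln_lt_div2 _ _ _ _ _ _ (Ppos t) _ h) => //.
        by rewrite mulr_gt0 // exprn_gt0.
      by rewrite mulr_gt0.
    move/ltW; by rewrite expr2.
  have Gmono : forall t : R, T1 <= t -> Gf T1 <= Gf t.
    move=> t tT.
    apply: (@mono_up R Gf (fun u => (4 * xf u - 2 * Yf u ^+ 2) - kd u - xf u) T1) => //.
    + exact: dG.
    + move=> u uT; have := Vhalf u m m0 m2 (reg1 u uT); lra.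
  have [T2' [T20 hT2]] := hU' (4 * (ln (4 / (3 * m)) - Gf T1 + 1 / 3)).
  set T2 := Num.max T1 T2'.
  have T1T2 : T1 <= T2 by rewrite le_max lexx.
  have T2T2 : T2' <= T2 by rewrite le_max lexx orbT.
  have T2pos : 0 <= T2 by exact: le_trans T10 T1T2.
  have reg2 : forall t : R, T2 <= t -> 4 * xf t <= 3 * m * Pf t.
    move=> t tT.
    have h1 : Uf T2' <= Uf t := Umono _ _ (le_trans T2T2 tT).
    have h2 := Gmono t (le_trans T1T2 tT).
    have [k1 _] := kbound t.
    have e : ln (Pf t / xf t) = Gf t + kf t + Uf t / 4 by rewrite /Gf; ring.
    have h3 : ln (4 / (3 * m)) < ln (Pf t / xf t) by rewrite e; lra.
    apply: ltW; apply: ln_lt_div2 h3 => //; [by rewrite mulr_gt0 | exact: Ppos | exact: xpos].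
  have dZpos : forall t : R, T2 <= t -> m / 3 <= Zf t * (kd t + 2 * Yf t ^+ 2).
    move=> t tT.
    have t0 : 0 <= t := le_trans T2pos tT.
    have g := Vgood t m m0 (xle t t0) (reg1 t (le_trans T1T2 tT)) (reg2 t tT).
    have x0 := xpos t.
    have ez : Zf t * xf t = expR (kf t) by rewrite /Zf divfK // gt_eqF.
    have ek : 1 + kf t <= expR (kf t) := expR_ge1Dx _.
    have Z0 : 0 < Zf t by rewrite /Zf divr_gt0 // expR_gt0.
    have [k1 _] := kbound t.
    have p1 := ler_wpM2l (ltW Z0) g.
    have p2 := ler_wpM2l (ltW m0) ek.
    have p3 := ler_wpM2l (ltW m0) k1.
    have e2 : Zf t * (m / 2 * xf t) = m / 2 * (Zf t * xf t) by ring.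
    rewrite e2 ez in p1.
    lra.
  have Hmono : forall t : R, T2 <= t -> Zf T2 - m / 3 * T2 <= Zf t - m / 3 * t.
    move=> t tT.
    apply: (@mono_up R (fun u => Zf u - m / 3 * u)
      (fun u => Zf u * (kd u + 2 * Yf u ^+ 2) - m / 3) T2) => //.
    + move=> u; have H := dfB (dZ u) (dfZ (m / 3) (is_derive_id u 1)).
      apply: is_derive_eq H _; ring.
    + move=> u uT; have := dZpos u uT; lra.
  have xZ : forall t : R, xf t * Zf t <= 3 / 2.
    move=> t; have x0 := xpos t.
    have ez : xf t * Zf t = expR (kf t) by rewrite /Zf mulrC divfK // gt_eqF.
    have [_ k2] := kbound t.
    have ek : 1 + - kf t <= expR (- kf t) := expR_ge1Dx _.
    have E1 : expR (- kf t) * expR (kf t) = 1 by rewrite -expRD addNr expR0.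
    have E0 := expR_gt0 (kf t).
    rewrite ez; nra.
  have Z2 : 0 < Zf T2 by rewrite /Zf divr_gt0 // ?expR_gt0 // xpos.
  exists (9 / m + 4 * T2 + 4); split.
    have : 0 <= 9 / m by rewrite divr_ge0 // ltW.
    lra.
  move=> t t0; apply: fin => //.
  have [x0 x2] := xbnd t.
  have m9 : 0 <= 9 / m by rewrite divr_ge0 // ltW.
  case: (lerP t (2 * T2 + 1)) => ht.
  + have : xf t * (1 + t) <= 2 * (1 + t) by rewrite ler_wpM2r // ?ltW //; lra.
    lra.
  + have tT : T2 <= t by lra.
    have h1 := Hmono t tT.
    have h2 : m / 6 * (1 + t) <= Zf t by nra.
    have h3 := ler_wpM2l (ltW x0) h2.
    have h4 := xZ t.
    have h5 : xf t * (1 + t) <= 9 / m.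
      rewrite ler_pdivlMr //; nra.
    lra.
Qed.

End Core.

Theorem mainTheorem11 (R : realType) (N1 N2 N3 Sp Sm : R -> R) :
  WH_solution N1 N2 N3 Sp Sm ->
  (forall t, N1 t = 0) ->
  (forall t, 0 < N2 t) ->
  (forall t, 0 < N3 t) ->
  (forall t, 0 < Sm t ^+ 2 + (N2 t - N3 t) ^+ 2) ->
  forall p : R, 1 < p ->
    (lebesgue_measure : measure _ R).-integrable `[0, +oo[%classic
      (fun t => ((`|1 + Sp t|) `^ p)%:E).
Proof.
move=> hW h1 h2 h3 hr p hp.
have hC : forall t : R, Sm t ^+ 2 = 1 - Sp t ^+ 2 - 3 / 4 * (N2 t - N3 t) ^+ 2.
  move=> t; have [_ _ _ _ c] := hW t; rewrite !h1 in c; nra.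
have d2 : forall t : R, is_derive t 1 N2
  ((2 * (Sp t ^+ 2 + Sm t ^+ 2) + 2 * Sp t + 2 * Num.sqrt 3 * Sm t) * N2 t).
  by move=> t; have [[_ d] _ _ _ _] := hW t; exact: d.
have d3 : forall t : R, is_derive t 1 N3
  ((2 * (Sp t ^+ 2 + Sm t ^+ 2) + 2 * Sp t - 2 * Num.sqrt 3 * Sm t) * N3 t).
  by move=> t; have [_ d _ _ _] := hW t; exact: d.
have dsp : forall t : R, is_derive t 1 Sp
  (- (2 - 2 * (Sp t ^+ 2 + Sm t ^+ 2)) * Sp t - 3 / 2 * (N2 t - N3 t) ^+ 2).
  move=> t; have [_ _ d _ _] := hW t; apply: is_derive_eq d _.
  rewrite /WH_Splus /WH_q !h1; ring.
have dsm : forall t : R, is_derive t 1 Sm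
  (- (2 - 2 * (Sp t ^+ 2 + Sm t ^+ 2)) * Sm t
   - 3 * (Num.sqrt 3 / 2) * (N2 t - N3 t) * (N2 t + N3 t)).
  move=> t; have [_ _ _ d _] := hW t; apply: is_derive_eq d _.
  rewrite /WH_Sminus /WH_q !h1; ring.
have [C [C0 hb]] := core_bound N2 N3 Sp Sm h2 h3 hr hC d2 d3 dsp dsm.
apply: (@integ_of_bound R (fun t => 1 + Sp t) C p) => //.
move=> t; apply: differentiable_continuous; apply/derivable1_diffP.
by case: (dfD (dfC 1 t) (dsp t)).
Qed.
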